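(* Let $F$ be an infinite field, $n=2$, and let $f=[z,a_1y_1,\dots,a_ny_n]$ and $g=[z,a'_1y_1,\dots,a'_my_m]$ be elements of $\mathcal{B}=\{[z,a_1y_1,\dots,a_ny_n]\mid n\ge1,\ a_i>0\}$. If $V_f\le V_g$, then $g\in\langle\{f\}\cup I\rangle_{T_{\mathbb{Z}_2}}$.
   Context: $UT_2(F)^{(-)}$ is the Lie algebra of $2\times2$ upper triangular matrices with bracket $[a,b]=ab-ba$ and canonical $\mathbb{Z}_2$-grading ($e_{11},e_{22}$ of degree $0$, $e_{12}$ of degree $1$); $I$ is its $T_{\mathbb{Z}_2}$-ideal of graded identities in the free Lie algebra on variables $y_i$ of degree $0$ and $z_i$ of degree $1$; $z$ is a variable of degree $1$. Commutators are left normed and $[z,a_1y_1,\dots,a_ny_n]$ denotes $[z,y_1,\dots,y_1,\dots,y_n,\dots,y_n]$ with $y_i$ repeated $a_i$ times. $\langle S\rangle_{T_{\mathbb{Z}_2}}$ is the $T_{\mathbb{Z}_2}$-ideal generated by $S$. For $f=[z,a_1y_1,\dots,a_ny_n]$ put $V_f=(a_1,\dots,a_n)$. For finite sequences of positive integers, $(a_1,\dots,a_n)\le(a'_1,\dots,a'_m)$ means there is a strictly increasing map $\varphi:\{1,\dots,n\}\to\{1,\dots,m\}$ with $a_i\le a'_{\varphi(i)}$ for all $i$. *)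

(* Defs.v *)
From mathcomp Require Import all_boot all_algebra.
Set Implicit Arguments. Unset Strict Implicit. Unset Printing Implicit Defensive.
Import GRing.Theory.
Local Open Scope ring_scope.

(* Terms of the free (nonassociative) algebra over F on variables
   y_i (degree 0) and z_i (degree 1).  The free Lie algebra L is the
   quotient of these terms by [lequiv] below. *)
Inductive lterm (F : Type) : Type :=
| LY of nat
| LZ of nat
| L0
| LAdd of lterm F & lterm F
| LScale of F & lterm F
| LBr of lterm F & lterm F.

Arguments LY {F}. Arguments LZ {F}. Arguments L0 {F}.

Section Lie.
Variable F : fieldType.

Inductive lequiv : lterm F -> lterm F -> Prop :=
| leq_refl x : lequiv x x
| leq_sym x y : lequiv x y -> lequiv y x
| leq_trans x y w : lequiv x y -> lequiv y w -> lequiv x w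
| leq_add x x' y y' : lequiv x x' -> lequiv y y' -> lequiv (LAdd x y) (LAdd x' y')
| leq_scale c x x' : lequiv x x' -> lequiv (LScale c x) (LScale c x')
| leq_br x x' y y' : lequiv x x' -> lequiv y y' -> lequiv (LBr x y) (LBr x' y')
| leq_addA x y w : lequiv (LAdd x (LAdd y w)) (LAdd (LAdd x y) w)
| leq_addC x y : lequiv (LAdd x y) (LAdd y x)
| leq_add0 x : lequiv (LAdd L0 x) x
| leq_addN x : lequiv (LAdd x (LScale (-1) x)) L0
| leq_scale1 x : lequiv (LScale 1 x) x
| leq_scaleA c d x : lequiv (LScale c (LScale d x)) (LScale (c * d) x)
| leq_scaleDr c x y : lequiv (LScale c (LAdd x y)) (LAdd (LScale c x) (LScale c y))
| leq_scaleDl c d x : lequiv (LScale (c + d) x) (LAdd (LScale c x) (LScale d x))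
| leq_brDl x y w : lequiv (LBr (LAdd x y) w) (LAdd (LBr x w) (LBr y w))
| leq_brZl c x w : lequiv (LBr (LScale c x) w) (LScale c (LBr x w))
| leq_alt x : lequiv (LBr x x) L0
| leq_jacobi x y w :
    lequiv (LAdd (LAdd (LBr (LBr x y) w) (LBr (LBr y w) x)) (LBr (LBr w x) y)) L0.

(* Syntactically Z_2-homogeneous terms of degree d (every element of the
   homogeneous component L_d is represented by such a term). *)
Fixpoint homog (d : bool) (t : lterm F) : bool :=
  match t with
  | LY _ => ~~ d
  | LZ _ => d
  | L0 => true
  | LAdd a b => homog d a && homog d b
  | LScale _ a => homog d a
  | LBr a b => [|| homog false a && homog d b | homog true a && homog (~~ d) b]
  end.

(* Substitution y_i |-> sy i, z_i |-> sz i (a graded endomorphism when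
   sy i are of degree 0 and sz i of degree 1). *)
Fixpoint lsubst (sy sz : nat -> lterm F) (t : lterm F) : lterm F :=
  match t with
  | LY i => sy i
  | LZ i => sz i
  | L0 => L0
  | LAdd a b => LAdd (lsubst sy sz a) (lsubst sy sz b)
  | LScale c a => LScale c (lsubst sy sz a)
  | LBr a b => LBr (lsubst sy sz a) (lsubst sy sz b)
  end.

(* The T_{Z2}-ideal generated by S: smallest set containing S, which is a
   Lie ideal (closed under 0, +, scalars, brackets with arbitrary elements),
   is a union of lequiv-classes, and is stable under graded endomorphisms. *)
Inductive in_Tideal (S : lterm F -> Prop) : lterm F -> Prop :=
| ti_gen t : S t -> in_Tideal S t
| ti_0 : in_Tideal S L0
| ti_add a b : in_Tideal S a -> in_Tideal S b -> in_Tideal S (LAdd a b)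
| ti_scale c a : in_Tideal S a -> in_Tideal S (LScale c a)
| ti_brl a b : in_Tideal S a -> in_Tideal S (LBr a b)
| ti_brr a b : in_Tideal S b -> in_Tideal S (LBr a b)
| ti_equiv a b : in_Tideal S a -> lequiv a b -> in_Tideal S b
| ti_subst a sy sz : in_Tideal S a ->
    (forall i, homog false (sy i)) -> (forall i, homog true (sz i)) ->
    in_Tideal S (lsubst sy sz a).

Fixpoint leval (ey ez : nat -> 'M[F]_2) (t : lterm F) : 'M[F]_2 :=
  match t with
  | LY i => ey i
  | LZ i => ez i
  | L0 => 0
  | LAdd a b => leval ey ez a + leval ey ez b
  | LScale c a => c *: leval ey ez a
  | LBr a b => leval ey ez a *m leval ey ez b - leval ey ez b *m leval ey ez a
  end.

(* Graded identities of UT_2(F)^(-): degree-0 variables range over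
   span(e11,e22), degree-1 variables over span(e12). *)
Definition UT2_identity (t : lterm F) : Prop :=
  forall ey ez : nat -> 'M[F]_2,
    (forall i, ey i 0 1 = 0 /\ ey i 1 0 = 0) ->
    (forall i, ez i 0 0 = 0 /\ ez i 1 1 = 0 /\ ez i 1 0 = 0) ->
    leval ey ez t = 0.

End Lie.

(* [z, a_1 y_1, ..., a_n y_n] with z := z_0 and y_{i+1} := LY i. *)
Definition brk_iter {F : Type} (t : lterm F) (i k : nat) : lterm F :=
  iter k (fun u => LBr u (LY i)) t.

Fixpoint comm_from {F : Type} (t : lterm F) (i : nat) (a : seq nat) : lterm F :=
  match a with
  | [::] => t
  | k :: a' => comm_from (brk_iter t i k) i.+1 a'
  end.

Definition commB {F : Type} (a : seq nat) : lterm F := comm_from (LZ 0) 0 a.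

Definition inB (a : seq nat) : bool := (0 < size a)%N && all (fun k => 0 < k)%N a.

Definition seq_le (a a' : seq nat) : Prop :=
  exists phi : nat -> nat,
    (forall i j, (i < j)%N -> (j < size a)%N -> (phi i < phi j)%N) /\
    (forall i, (i < size a)%N -> (phi i < size a')%N /\ (nth 0 a i <= nth 0 a' (phi i))%N).

(* Main.v *)
Require Import Defs.
From mathcomp Require Import all_boot all_algebra zify ring.
Import GRing.Theory.

Definition br {F : Type} (u : lterm F) (w : seq nat) : lterm F :=
  foldl (fun t i => LBr t (LY i)) u w.

Fixpoint ws (a : seq nat) (i : nat) : seq nat :=
  match a with [::] => [::] | k :: a' => nseq k i ++ ws a' i.+1 end.

Lemma brk_iter_br {F : Type} (t : lterm F) i k : brk_iter t i k = br t (nseq k i).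
Proof.
rewrite /brk_iter /br; elim: k t => [|k IH] t //=.
by rewrite -IH -iterSr.
Qed.

Lemma comm_from_br {F : Type} a : forall (t : lterm F) i, comm_from t i a = br t (ws a i).
Proof.
elim: a => [|k a IH] t i //=.
by rewrite IH brk_iter_br /br foldl_cat.
Qed.

Lemma br_cat {F : Type} (u : lterm F) w1 w2 : br u (w1 ++ w2) = br (br u w1) w2.
Proof. by rewrite /br foldl_cat. Qed.

Lemma lsubst_br (F : fieldType) (phi : nat -> nat) sz w : forall (u : lterm F),
  lsubst (fun i => LY (phi i)) sz (br u w) = br (lsubst (fun i => LY (phi i)) sz u) (map phi w).
Proof. by elim: w => [|k w IH] u //=. Qed.

Lemma ws_shift a i : ws a i = map (addn i) (ws a 0).
Proof.
elim: a i => [|k a IH] i //=.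
rewrite map_cat map_nseq addn0 IH (IH 1) -map_comp; congr (_ ++ _).
by apply: eq_map => x /=; lia.
Qed.

Lemma ws_cat b1 b2 s : ws (b1 ++ b2) s = ws b1 s ++ ws b2 (s + size b1).
Proof.
elim: b1 s => [|k b1 IH] s /=; first by rewrite addn0.
by rewrite IH catA addSnnS.
Qed.

Lemma key a : forall b s (phi : nat -> nat),
  (forall i j, (i < j)%N -> (j < size a)%N -> (phi i < phi j)%N) ->
  (forall i, (i < size a)%N -> [/\ (s <= phi i)%N, (phi i < s + size b)%N &
        (nth 0 a i <= nth 0 b (phi i - s))%N]) ->
  subseq (map phi (ws a 0)) (ws b s).
Proof.
elim: a => [|k a IH] b s phi Hinc Hb /=; first by rewrite sub0seq.
have [H1 H2 H3] := Hb 0%N isT.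
set d := (phi 0%N - s)%N.
have Hd : (d < size b)%N by rewrite /d; lia.
rewrite -(cat_take_drop d b) ws_cat (drop_nth 0 Hd) /= size_take Hd.
rewrite map_cat map_nseq -[X in subseq X _]cat0s; apply: cat_subseq; first exact: sub0seq.
have -> : (s + d = phi 0%N)%N by rewrite /d; lia.
apply: cat_subseq.
  move: H3 => /= H3; rewrite -/d -(subnKC H3) nseqD; exact: prefix_subseq.
rewrite (ws_shift a 1) -map_comp.
apply: IH.
  by move=> i j ij jl /=; apply: Hinc => /=; lia.
move=> i il /=.
have [G1 G2 G3] := Hb i.+1 il.
have := Hinc 0%N i.+1 isT il => G4.
split.
- rewrite add1n; lia.
- rewrite size_drop add1n /d; lia.
- rewrite nth_drop add1n.
  have -> : (d.+1 + (phi i.+1 - (phi 0%N).+1) = phi i.+1 - s)%N by rewrite /d; lia.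
  exact: G3.
Qed.

Local Open Scope ring_scope.
Lemma I2 (i : 'I_2) : i = 0 \/ i = 1.
Proof. case: i => [[|[|//]]] Hi; [left|right]; exact: val_inj. Qed.
Lemma br_step (F: fieldType) (M D : 'M[F]_2): M 0 0 = 0 -> M 1 1 = 0 -> M 1 0 = 0 -> D 0 1 = 0 -> D 1 0 = 0 -> M *m D - D *m M = (D 1 1 - D 0 0) *: M.
Proof.
move=> h1 h2 h3 h4 h5; apply/matrixP=> i j; rewrite !mxE !big_ord_recl !big_ord0 ?mxE.
have l1 : lift 0 (0 : 'I_1) = 1 :> 'I_2 by exact: val_inj.
have l0 : ord0 = 0 :> 'I_2 by exact: val_inj.
rewrite l1 ?l0.
case: (I2 i) => ->; case: (I2 j) => ->; rewrite ?h1 ?h2 ?h3 ?h4 ?h5 ?mul0r ?mulr0 ?addr0 ?subr0 ?sub0r. all: try ring.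
Qed.

Definition upper {F : fieldType} (M : 'M[F]_2) := [/\ M 0 0 = 0, M 1 1 = 0 & M 1 0 = 0].

Lemma leval_br (F : fieldType) (ey ez : nat -> 'M[F]_2)
  (Hy : forall i, ey i 0 1 = 0 /\ ey i 1 0 = 0) w : forall u,
  upper (leval ey ez u) ->
  leval ey ez (br u w) = (\prod_(k <- w) (ey k 1 1 - ey k 0 0)) *: leval ey ez u.
Proof.
elim: w => [|k w IH] u Hu; first by rewrite big_nil scale1r.
rewrite /= -/(br _ _) IH /=.
  have [h4 h5] := Hy k; case: Hu => h1 h2 h3.
  by rewrite br_step // scalerA big_cons mulrC.
have [h4 h5] := Hy k; case: Hu => h1 h2 h3.
by rewrite br_step //; split; rewrite mxE ?h1 ?h2 ?h3 mulr0.
Qed.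

Lemma ti_br (F : fieldType) S w : forall u : lterm F, in_Tideal S u -> in_Tideal S (br u w).
Proof.
elim: w => [|k w IH] u Hu //=.
by apply: IH; apply: ti_brl.
Qed.

Theorem mainTheorem4 (F : fieldType)
  (F_infinite : forall s : seq F, exists x : F, x \notin s)
  (a a' : seq nat) :
  inB a -> inB a' -> seq_le a a' ->
  in_Tideal (fun t : lterm F => t = commB a \/ UT2_identity t) (commB a').
Proof.
move=> _ _ [phi [Hinc Hb]].
have Hsub : subseq (map phi (ws a 0)) (ws a' 0).
  apply: key => // i /Hb [h1 h2]; split => //; rewrite subn0 //.
have [r Hr] := perm_to_subseq Hsub.
set S := (fun t : lterm F => t = commB a \/ UT2_identity t).
pose sy := fun i => @LY F (phi i).
pose X := br (lsubst sy (fun i => LZ i) (commB a)) r.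
have HX : in_Tideal S X.
  apply: ti_br; apply: ti_subst => //.
  by apply: ti_gen; left.
have HY : in_Tideal S (LAdd (commB a') (LScale (-1) X)).
  apply: ti_gen; right => ey ez Hy Hz /=.
  have Hu : upper (leval ey ez (LZ 0)).
    by have [h1 [h2 h3]] := Hz 0%N; split.
  rewrite /X /commB !comm_from_br lsubst_br /= -br_cat !leval_br //.
  by rewrite (perm_big _ Hr) scaleN1r subrr.
apply: Defs.ti_equiv (ti_add HX HY) _.
apply: Defs.leq_trans; first exact: Defs.leq_addA.
apply: Defs.leq_trans; first by apply: Defs.leq_add; [exact: Defs.leq_addC | exact: Defs.leq_refl].
apply: Defs.leq_trans; first by apply: Defs.leq_sym; exact: Defs.leq_addA.
apply: Defs.leq_trans; first by apply: Defs.leq_add; [exact: Defs.leq_refl | exact: Defs.leq_addN].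
apply: Defs.leq_trans; first exact: Defs.leq_addC.
exact: Defs.leq_add0.
Qed.
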